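(* Let $\phi\in\mathrm{Aut}_0(H)$. Then for any $n\in\mathbb{Z}$ and $m\geq1$, $\phi(x^ny^m)=\alpha_{n,m}x^ny^m+h_{n,m}$ for some $\alpha_{n,m}\in k^\times$ and $h_{n,m}\in\sum_{i=0}^{m-1}H(i)$. Moreover, if $\alpha_{n,1}=1$ for all $n\in\mathbb{Z}$, then $\alpha_{n,m}=1$ for all $n\in\mathbb{Z}$ and $m\geq1$.
   Context: Let $k$ be a field and $0\neq q\in k$ not a root of unity. $H=k_q[x,x^{-1},y]$ is the $k$-algebra generated by $x,x^{-1},y$ with $xx^{-1}=x^{-1}x=1$, $yx=qxy$, a Hopf algebra with $\Delta(x)=x\otimes x$, $\Delta(x^{-1})=x^{-1}\otimes x^{-1}$, $\Delta(y)=y\otimes x+1\otimes y$, $\varepsilon(x)=1$, $\varepsilon(y)=0$; $\{x^ny^m:n\in\mathbb{Z},m\in\mathbb{N}\}$ is a $k$-basis. $H_0=\mathrm{span}\{x^n:n\in\mathbb{Z}\}$ and $H(m)=H_0y^m$. $\mathrm{Aut}_0(H)$ is the group of coalgebra automorphisms $\phi$ of $H$ with $\phi(1)=1$. *)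

(* Defs.v *)
From mathcomp Require Import all_boot all_algebra.
From mathcomp Require Import finmap.
From mathcomp.multinomials Require Import monalg.
Set Implicit Arguments. Unset Strict Implicit. Unset Printing Implicit Defensive.
Import GRing.Theory.
Local Open Scope ring_scope.

(* H = k_q[x, x^-1, y] is modelled as the free k-vector space on the basis
   { x^n y^m : n : int, m : nat }, the basis element x^n y^m being indexed by
   the pair (n, m).  H (x) H is the free k-vector space on pairs of basis
   indices ((n,m),(n',m')) <-> x^n y^m (x) x^n' y^m'. *)
Definition B := (int * nat)%type.
Definition Hq (k : fieldType) := {malg k[B]}.
Definition Tq (k : fieldType) := {malg k[(B * B)%type]}.

Definition e {k : fieldType} (b : B) : Hq k := << b >>.
Definition et {k : fieldType} (b c : B) : Tq k := << (b, c) >>.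

(* product of basis elements in H, using yx = qxy:
   (x^n1 y^m1)(x^n2 y^m2) = q^(m1 n2) x^(n1+n2) y^(m1+m2) *)
Definition bcoef {k : fieldType} (q : k) (b c : B) : k := q ^ (b.2%:Z * c.1)%R.
Definition bidx (b c : B) : B := (b.1 + c.1, (b.2 + c.2)%N).

(* the (bilinear) algebra product on H (x) H : (a(x)b)(c(x)d) = ac (x) bd *)
Definition tmul {k : fieldType} (q : k) (u v : Tq k) : Tq k :=
  \sum_(a <- msupp u) \sum_(b <- msupp v)
     (u@_a * v@_b * bcoef q a.1 b.1 * bcoef q a.2 b.2) *:
       et (bidx a.1 b.1) (bidx a.2 b.2).

(* Delta(y) = y (x) x + 1 (x) y *)
Definition Dy {k : fieldType} : Tq k := et (0, 1%N) (1, 0%N) + et (0, 0%N) (0, 0%N.+1).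

(* Delta(x^n y^m) = Delta(x)^n Delta(y)^m = (x^n (x) x^n) Delta(y)^m *)
Definition Delta_b {k : fieldType} (q : k) (b : B) : Tq k :=
  tmul q (et (b.1, 0%N) (b.1, 0%N)) (iter b.2 (tmul q Dy) (et (0, 0%N) (0, 0%N))).

Definition Delta {k : fieldType} (q : k) (v : Hq k) : Tq k :=
  \sum_(b <- msupp v) v@_b *: Delta_b q b.

Definition eps {k : fieldType} (v : Hq k) : k :=
  \sum_(b <- msupp v | b.2 == 0%N) v@_b.

Definition tmap {k : fieldType} (f : Hq k -> Hq k) (u : Tq k) : Tq k :=
  \sum_(a <- msupp u) u@_a *:
     \sum_(c <- msupp (f (e a.1))) \sum_(d <- msupp (f (e a.2)))
        ((f (e a.1))@_c * (f (e a.2))@_d) *: et c d.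

Definition Aut0 {k : fieldType} (q : k) (phi : Hq k -> Hq k) : Prop :=
  [/\ linear phi, bijective phi,
      (forall v, Delta q (phi v) = tmap phi (Delta q v)),
      (forall v, eps (phi v) = eps v)
    & phi (e (0, 0%N)) = e (0, 0%N)].

(* h lies in sum_{i=0}^{m-1} H(i), where H(i) = H_0 y^i = span{x^n y^i} *)
Definition lowdeg {k : fieldType} (m : nat) (h : Hq k) : Prop :=
  forall b, b \in msupp h -> (b.2 < m)%N.

(* Main.v *)
Require Import Defs.
From mathcomp Require Import all_boot all_algebra.
From mathcomp Require Import finmap.
From mathcomp.multinomials Require Import monalg.
From mathcomp Require Import zify ring.
From Stdlib Require Import Classical.
Set Implicit Arguments. Unset Strict Implicit. Unset Printing Implicit Defensive.
Import GRing.Theory.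
Local Open Scope ring_scope.

Section Generic.
Variable k : fieldType.

Definition Lf (K : choiceType) (G : K -> k) (u : {malg k[K]}) : k :=
  \sum_(a <- msupp u) u@_a * G a.

Lemma LfEw (K : choiceType) (G : K -> k) (u : {malg k[K]}) (d : {fset K}) :
  (msupp u `<=` d)%fset -> Lf G u = \sum_(a <- d) u@_a * G a.
Proof.
move=> le; rewrite /Lf (big_fset_incl _ le) //= => x _ /mcoeff_outdom ->.
by rewrite mul0r.
Qed.

Lemma LfD (K : choiceType) (G : K -> k) (u v : {malg k[K]}) :
  Lf G (u + v) = Lf G u + Lf G v.
Proof.
pose d := (msupp u `|` msupp v)%fset.
rewrite (@LfEw _ _ _ d) ?msuppD_le // (@LfEw _ _ u d) ?fsubsetUl //.
rewrite (@LfEw _ _ v d) ?fsubsetUr // -big_split /=.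
by apply: eq_bigr => a _; rewrite mcoeffD mulrDl.
Qed.

Lemma LfU (K : choiceType) (G : K -> k) c x :
  Lf G << c *g x >> = c * G x.
Proof. by rewrite (LfEw _ msuppU_le) big_seq_fset1 mcoeffUU. Qed.

Lemma sum_fset_single (K : choiceType) (s : {fset K}) (F : K -> k) c0 :
  (forall c, c != c0 -> F c = 0) -> (c0 \notin s -> F c0 = 0) ->
  \sum_(c <- s) F c = F c0.
Proof.
move=> h1 h2; case: (boolP (c0 \in s)) => hc.
  rewrite (big_fsetD1 c0) //= big1_fset ?addr0 // => c.
  by rewrite in_fsetD1 => /andP [hne _] _; rewrite h1.
rewrite h2 // big1_fset // => c hcs _; apply: h1.
by apply/eqP => ec; move: hc; rewrite -ec hcs.
Qed.

Lemma Lf_single (K : choiceType) (G : K -> k) (u : {malg k[K]}) c0 :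
  (forall c, c != c0 -> G c = 0) -> Lf G u = u@_c0 * G c0.
Proof.
move=> h; rewrite /Lf (sum_fset_single (c0 := c0)) // => [c /h -> |/mcoeff_outdom ->].
  by rewrite mulr0.
by rewrite mul0r.
Qed.

Lemma Lf_list (K : choiceType) (G : K -> k) (u : {malg k[K]}) (L : seq K) :
  uniq L -> (forall b, u@_b != 0 -> b \in L) ->
  Lf G u = \sum_(b <- L) u@_b * G b.
Proof.
move=> uL hL; rewrite /Lf [RHS](bigID (fun b => b \in msupp u)) /=.
rewrite [X in _ = _ + X]big1 ?addr0; last first.
  by move=> b /mcoeff_outdom ->; rewrite mul0r.
rewrite -[RHS]big_filter.
apply: perm_big; apply: uniq_perm.
- exact: fset_uniq.
- exact: filter_uniq.
move=> b; rewrite mem_filter; case: (boolP (b \in msupp u)) => //= hb.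
by rewrite hL // mcoeff_neq0.
Qed.

Lemma sum_nat_single (N j : nat) (F : nat -> k) :
  (j < N)%N -> (forall i, (i < N)%N -> i != j -> F i = 0) ->
  \sum_(0 <= i < N) F i = F j.
Proof.
move=> hj h; rewrite big_mkord (bigD1 (Ordinal hj)) //= big1 ?addr0 // => i hi.
apply: h => //.
Qed.

Lemma sum_nat_zero (N : nat) (F : nat -> k) :
  (forall i, (i < N)%N -> F i = 0) -> \sum_(0 <= i < N) F i = 0.
Proof. by move=> h; rewrite big_mkord big1 // => i _; apply: h. Qed.

End Generic.


Section Hopf.
Variable k : fieldType.
Variable q : k.

Lemma e_coef (b c : B) : (e b : Hq k)@_c = (b == c)%:R.
Proof. by rewrite /e mcoeffU. Qed.

Lemma et_coef (b c : B) x : (et b c : Tq k)@_x = ((b, c) == x)%:R.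
Proof. by rewrite /et mcoeffU. Qed.

Lemma Lf_et (G : B * B -> k) b c : Lf G (et b c : Tq k) = G (b, c).
Proof. by rewrite /et LfU mul1r. Qed.

Lemma Lf_e (G : B -> k) b : Lf G (e b : Hq k) = G b.
Proof. by rewrite /e LfU mul1r. Qed.

Definition TTc (a b x : B * B) : k :=
  bcoef q a.1 b.1 * bcoef q a.2 b.2 * ((bidx a.1 b.1, bidx a.2 b.2) == x)%:R.

Lemma tmul_coef (u v : Tq k) x :
  (tmul q u v)@_x = Lf (fun a => Lf (fun b => TTc a b x) v) u.
Proof.
rewrite /tmul raddf_sum /Lf; apply: eq_bigr => a _.
rewrite raddf_sum big_distrr; apply: eq_bigr => b _.
by rewrite /= mcoeffZ et_coef /TTc !mulrA.
Qed.

Lemma Delta_coef (v : Hq k) x :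
  (Delta q v)@_x = Lf (fun b => (Delta_b q b)@_x) v.
Proof.
by rewrite /Delta raddf_sum /Lf; apply: eq_bigr => b _; rewrite /= mcoeffZ.
Qed.

Lemma tmap_coef (f : Hq k -> Hq k) (u : Tq k) x :
  (tmap f u)@_x = Lf (fun a => (f (e a.1))@_x.1 * (f (e a.2))@_x.2) u.
Proof.
rewrite /tmap raddf_sum /Lf; apply: eq_bigr => a _; rewrite /= mcoeffZ; congr (_ * _).
rewrite raddf_sum (sum_fset_single (c0 := x.1)).
- rewrite raddf_sum (sum_fset_single (c0 := x.2)).
  + by rewrite /= mcoeffZ et_coef -surjective_pairing eqxx mulr1.
  + move=> d hd; rewrite /= mcoeffZ et_coef.
    have -> : ((x.1, d) == x) = false by apply: contraNF hd => /eqP <-.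
    by rewrite mulr0.
  + by move/mcoeff_outdom => ->; rewrite /= mcoeffZ mulr0 mul0r.
- move=> c hc; rewrite raddf_sum big1_fset // => d _ _.
  rewrite /= mcoeffZ et_coef.
  have -> : ((c, d) == x) = false by apply: contraNF hc => /eqP <-.
  by rewrite mulr0.
- move/mcoeff_outdom => h; rewrite raddf_sum big1_fset // => d _ _.
  by rewrite /= mcoeffZ h !mul0r.
Qed.

Lemma eps_Lf (v : Hq k) : eps v = Lf (fun b => (b.2 == 0%N)%:R) v.
Proof.
rewrite /eps /Lf big_mkcond /=; apply: eq_bigr => b _.
by case: (b.2 == 0%N); rewrite ?mulr1 ?mulr0.
Qed.


Fixpoint Cq (m i : nat) : k :=
  match m with
  | 0 => (i == 0)%:R
  | m'.+1 => (if i is i'.+1 then Cq m' i' else 0) + q ^+ i * Cq m' i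
  end.

Lemma Cq_gt m i : (m < i)%N -> Cq m i = 0.
Proof.
elim: m i => [|m IH] [|i] //= h.
by rewrite IH // IH ?mulr0 ?addr0 // ltnW.
Qed.

Lemma Cq0 m : Cq m 0 = 1.
Proof. by elim: m => //= m ->; rewrite add0r mul1r. Qed.

Lemma Cqmm m : Cq m m = 1.
Proof. by elim: m => //= m ->; rewrite Cq_gt ?mulr0 ?addr0. Qed.

Lemma Cq1 m : (q - 1) * Cq m 1 = q ^+ m - 1.
Proof.
elim: m => [|m IH] /=; first by rewrite mulr0 expr0 subrr.
rewrite Cq0 expr1 mulrDr mulr1 mulrCA IH exprS mulrBr mulr1.
by rewrite addrC addrA subrK.
Qed.

Definition Pm (m : nat) : Tq k := iter m (tmul q Dy) (et (0, 0%N) (0, 0%N)).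

Definition Pc (m : nat) (x : B * B) : k :=
  if (x.1.1 == 0) && (x.2.1 == Posz x.1.2) && (x.1.2 + x.2.2 == m)%N
  then Cq m x.1.2 else 0.

Lemma Dy_def : Dy = et (0, 1%N) (1, 0%N) + et (0, 0%N) (0, 1%N) :> Tq k.
Proof. by []. Qed.

Lemma Lf_et2 (G : B * B -> k) b1 c1 b2 c2 :
  Lf G (et b1 c1 + et b2 c2 : Tq k) = G (b1, c1) + G (b2, c2).
Proof. have h1 := Lf_et G b1 c1. have h2 := Lf_et G b2 c2. rewrite LfD. rewrite [X in X + _]h1 [X in _ + X]h2. by []. Qed.

Lemma Lf_Dy (G : B * B -> k) : Lf G (Dy : Tq k) = G ((0, 1%N), (1, 0%N)) + G ((0, 0%N), (0, 1%N)).
Proof. rewrite Dy_def. exact: Lf_et2. Qed.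

Lemma PmE m x : (Pm m)@_x = Pc m x.
Proof.
elim: m x => [|m IH] x.
  rewrite /Pm /= et_coef /Pc; case: x => [[a i] [b j]] /=.
  case: i => [|i]; case: j => [|j]; rewrite !xpair_eqE /= ?andbF ?andbT ?addnS ?addSn //=.
  by rewrite (eq_sym 0 a) (eq_sym 0 b); case: (_ && _).
have -> : Pm m.+1 = tmul q Dy (Pm m) by [].
rewrite tmul_coef Lf_Dy.
rewrite [X in X + _](@Lf_single k _ _ _ ((x.1.1, x.1.2.-1), (x.2.1 - 1, x.2.2))); last first.
  move=> [[c11 c12] [c21 c22]] hc; rewrite /TTc; case: eqP => [ex|]; last by rewrite mulr0.
  subst x; move/eqP: hc; case; rewrite /bidx /=; congr ((_,_),(_,_)); lia.
rewrite [X in _ + X](@Lf_single k _ _ _ ((x.1.1, x.1.2), (x.2.1, x.2.2.-1))); last first.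
  move=> [[c11 c12] [c21 c22]] hc; rewrite /TTc; case: eqP => [ex|]; last by rewrite mulr0.
  subst x; move/eqP: hc; case; rewrite /bidx /=; congr ((_,_),(_,_)); lia.
rewrite !IH.
case: x => [[a i] [b j]] /=.
case: (a =P 0) => [->|ha]; last first.
  have ha' : (a == 0) = false by apply/eqP.
  by rewrite /Pc /= ha' !mul0r addr0.
rewrite /Pc /TTc /bcoef /bidx /= !mulr0 !mul0r !expr0z !mul1r /=.
have e1 : 1 + (b - 1) = b by lia.
rewrite e1 !add0r.
case: i => [|i]; case: j => [|j]; rewrite !xpair_eqE /= ?eqxx /= ?andbT ?andbF ?mulr0 ?mul0r ?addr0 ?add0r.
- by [].
- rewrite !add0n eqSS; case: (b =P 0) => [->|] /=; rewrite ?mul0r //.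
  case: (j == m); rewrite ?mul0r // Cq0 expr0 !mul1r ?mulr1; exact: (expr0z q).
- have -> : (b - 1 == Posz i) = (b == Posz i.+1) by apply/idP/idP => /eqP h; apply/eqP; lia.
  rewrite !addn0 eqSS mulr1; case: (b =P Posz i.+1) => _ /=; last by [].
  case: eqP => // ->.
  by rewrite (@Cq_gt m m.+1) // mulr0 addr0.
- have -> : (b - 1 == Posz i) = (b == Posz i.+1) by apply/idP/idP => /eqP h; apply/eqP; lia.
  rewrite !addSn !addnS !eqSS mulr1; case: (b =P Posz i.+1) => [->|] /=; last by rewrite mul0r addr0.
  rewrite -exprnP mulr1.
  by case: (_ == m); rewrite ?mul0r ?addr0 // [_ * q ^+ _]mulrC.
Qed.

Lemma Delta_b_coef (b : B) x :
  (Delta_b q b)@_x = Pc b.2 ((x.1.1 - b.1, x.1.2), (x.2.1 - b.1, x.2.2)).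
Proof.
have -> : Delta_b q b = tmul q (et (b.1, 0%N) (b.1, 0%N)) (Pm b.2) by [].
rewrite tmul_coef Lf_et.
rewrite (@Lf_single k _ _ _ ((x.1.1 - b.1, x.1.2), (x.2.1 - b.1, x.2.2))); last first.
  move=> [[c11 c12] [c21 c22]] hc; rewrite /TTc; case: eqP => [ex|]; last by rewrite mulr0.
  subst x; move/eqP: hc; case; rewrite /bidx /=; congr ((_,_),(_,_)); lia.
rewrite PmE /TTc /bcoef /bidx /= !mul0r !expr0z !mul1r.
have -> : (b.1 + (x.1.1 - b.1), (0 + x.1.2)%N, (b.1 + (x.2.1 - b.1), (0 + x.2.2)%N)) = x.
  by case: x => [[? ?] [? ?]] /=; congr ((_,_),(_,_)); lia.
by rewrite eqxx mulr1.
Qed.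

Lemma DeltaE (v : Hq k) (p r : B) :
  (Delta q v)@_(p, r) =
  if r.1 == p.1 + Posz p.2 then Cq (p.2 + r.2) p.2 * v@_(p.1, (p.2 + r.2)%N) else 0.
Proof.
rewrite Delta_coef (@Lf_single k _ _ _ (p.1, (p.2 + r.2)%N)); last first.
  move=> [c1 c2] hc; rewrite Delta_b_coef /Pc /=.
  case: ifP => // /andP [/andP [/eqP h1 /eqP h2] /eqP h3].
  by move/eqP: hc; case; congr (_,_) => //=; lia.
rewrite Delta_b_coef /Pc /= subrr.
case: (boolP (r.1 == p.1 + Posz p.2)) => /eqP h.
  have -> : r.1 - p.1 = Posz p.2 by lia.
  rewrite (eqxx (Posz p.2)) (eqxx (p.2 + r.2)%N) andbT mulrC.
  by [].
have -> : (r.1 - p.1 == Posz p.2) = false by apply/eqP; lia.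
by rewrite andbF /= mulr0.
Qed.

Lemma tmap_Delta_e (f : Hq k -> Hq k) (n : int) (m : nat) (p r : B) :
  (tmap f (Delta q (e (n, m))))@_(p, r) =
  \sum_(0 <= i < m.+1) Cq m i * (f (e (n, i)))@_p * (f (e (n + Posz i, (m - i)%N)))@_r.
Proof.
pose g := fun i : nat => (((n, i) : B), ((n + Posz i, (m - i)%N) : B)).
have ginj : injective g by move=> i j /(congr1 (fun x => x.1.2)).
rewrite tmap_coef (@Lf_list k _ _ _ (map g (iota 0 m.+1))); first last.
- move=> [p' r']; rewrite DeltaE; case: ifP => [/eqP h1|_]; last by rewrite eqxx.
  rewrite e_coef; case: ((n, m) =P (p'.1, (p'.2 + r'.2)%N)) => [[h2 h3]|_]; last by rewrite mulr0 eqxx.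
  move=> _; apply/mapP; exists p'.2; first by rewrite mem_iota /= add0n ltnS h3 leq_addr.
  rewrite /g; case: p' h1 h2 h3 => [p1 p2] /= h1 -> ->; case: r' h1 => r1 r2 /= ->.
  by rewrite addKn.
- by rewrite map_inj_uniq // iota_uniq.
rewrite big_map /index_iota subn0; apply: eq_big_seq => i; rewrite mem_iota add0n ltnS => /andP [_ hi].
rewrite DeltaE /g /= eqxx e_coef subnKC // eqxx mulr1 mulrA.
by [].
Qed.

End Hopf.


Arguments Cq : simpl never.
Section Abstract.
Variable k : fieldType.
Variable q : k.
Hypothesis hqroot : forall n : nat, (0 < n)%N -> q ^+ n != 1.
Variable Phi : B -> B -> k.
Hypothesis KEY : forall (n : int) (m : nat) (p r : B),
  (if r.1 == p.1 + Posz p.2 then Cq q (p.2 + r.2) p.2 * Phi (n, m) (p.1, (p.2 + r.2)%N) else 0)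
  = \sum_(0 <= i < m.+1) Cq q m i * Phi (n, i) p * Phi (n + Posz i, (m - i)%N) r.
Hypothesis EPS : forall n : int, exists x : B, x.2 = 0%N /\ Phi (n, 0%N) x != 0.
Hypothesis ONE : forall x, Phi (0, 0%N) x = ((0, 0%N) == x)%:R.
Hypothesis INJ0 : forall n : int, ~ (forall x, Phi (n, 0%N) x = Phi (n + 1, 0%N) x).
Hypothesis INJ1 : forall (n : int) (beta : k),
  ~ (forall x, Phi (n, 1%N) x = beta * (Phi (n, 0%N) x - Phi (n + 1, 0%N) x)).

Lemma CqM1 M : (0 < M)%N -> Cq q M 1 != 0.
Proof.
move=> hM; apply/eqP => h; move: (Cq1 q M); rewrite h mulr0 => /eqP.
by rewrite eq_sym subr_eq0; apply/negP; apply: hqroot.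
Qed.

Lemma KEY0 n p r :
  (if r.1 == p.1 + Posz p.2 then Cq q (p.2 + r.2) p.2 * Phi (n, 0%N) (p.1, (p.2 + r.2)%N) else 0)
  = Phi (n, 0%N) p * Phi (n, 0%N) r.
Proof.
rewrite KEY big_nat1 Cq0 mul1r.
by have -> : n + Posz 0 = n by lia.
Qed.

Lemma KEY1 n p r :
  (if r.1 == p.1 + Posz p.2 then Cq q (p.2 + r.2) p.2 * Phi (n, 1%N) (p.1, (p.2 + r.2)%N) else 0)
  = Phi (n, 0%N) p * Phi (n, 1%N) r + Phi (n, 1%N) p * Phi (n + 1, 0%N) r.
Proof.
rewrite KEY big_nat_recr // big_nat1 Cq0 Cqmm !mul1r.
by have -> : n + Posz 0 = n by lia.
Qed.

Lemma grp n : exists s : int, forall x, Phi (n, 0%N) x = (x == (s, 0%N))%:R.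
Proof.
have deg0 : forall a M, Phi (n, 0%N) (a, M) != 0 -> M = 0%N.
  move=> a M hw; case: M hw => // M hw; exfalso; move: (KEY0 n (a, M.+1) (a, M.+1)) => /=.
  have -> : (a == a + Posz M.+1) = false by apply/eqP; lia.
  by move/esym/eqP; rewrite mulf_eq0 orbb (negbTE hw).
have idem : forall a, Phi (n, 0%N) (a, 0%N) = Phi (n, 0%N) (a, 0%N) * Phi (n, 0%N) (a, 0%N).
  move=> a; rewrite -KEY0 /=.
  have -> : (a == a + Posz 0) = true by apply/eqP; lia.
  by rewrite mul1r.
have orth : forall a b, a != b -> Phi (n, 0%N) (a, 0%N) * Phi (n, 0%N) (b, 0%N) = 0.
  move=> a b hab; rewrite -KEY0 /=.
  have -> : (b == a + Posz 0) = false by apply/eqP => h; move/eqP: hab; apply; lia.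
  by [].
have one : forall a, Phi (n, 0%N) (a, 0%N) != 0 -> Phi (n, 0%N) (a, 0%N) = 1.
  move=> a ha; apply: (mulfI ha); rewrite mulr1; exact/esym/idem.
case: (EPS n) => [[s M] [/= hM hs]]; subst M; exists s => [[a M]].
case: (eqVneq (a, M) (s, 0%N)) => [[-> ->]|hne] /=; first by rewrite one.
case: (eqVneq (Phi (n, 0%N) (a, M)) 0) => // hw; exfalso.
have hM := deg0 _ _ hw; subst M.
have has : a != s by apply: contraNneq hne => ->.
move: (orth _ _ has); rewrite (one _ hw) (one _ hs) mul1r => /eqP.
by rewrite oner_eq0.
Qed.

Lemma deg1 n s t :
  (forall x, Phi (n, 0%N) x = (x == (s, 0%N))%:R) ->
  (forall x, Phi (n + 1, 0%N) x = (x == (t, 0%N))%:R) -> s != t ->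
  [/\ t = s + 1, Phi (n, 1%N) (s, 1%N) != 0,
      (forall a, a != s -> Phi (n, 1%N) (a, 1%N) = 0) &
      (forall a M, (1 < M)%N -> Phi (n, 1%N) (a, M) = 0)].
Proof.
move=> hs ht hst.
have hi : forall a M, (1 < M)%N -> Phi (n, 1%N) (a, M) = 0.
  move=> a M hM; move: (KEY1 n (a, 1%N) (a + 1, (M - 1)%N)) => /=.
  have -> : (a + 1 == a + Posz 1) = true by apply/eqP; lia.
  rewrite subnKC ?(ltnW hM) // hs ht !xpair_eqE /= andbF.
  have -> : (M - 1 == 0)%N = false by apply/eqP; lia.
  rewrite andbF mulr0 mul0r addr0 => /eqP; rewrite mulf_eq0 (negbTE (CqM1 _)) ?(ltnW hM) //.
  by move/eqP.
have hii : forall a, Phi (n, 1%N) (a, 1%N) != 0 -> a = s /\ t = a + 1.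
  move=> a ha; split.
    apply/eqP; apply: contraNT ha => has.
    move: (KEY1 n (a, 0%N) (a, 1%N)) => /=.
    have -> : (a == a + Posz 0) = true by apply/eqP; lia.
    rewrite Cq0 mul1r hs ht !xpair_eqE /= andbF mulr0 addr0 andbT (negbTE has) mul0r.
    by move=> ->.
  apply/eqP; apply: contraNT ha => hat.
  move: (KEY1 n (a, 1%N) (a + 1, 0%N)) => /=.
  have -> : (a + 1 == a + Posz 1) = true by apply/eqP; lia.
  rewrite Cqmm mul1r hs ht !xpair_eqE /= andbF mul0r add0r andbT.
  have -> : (a + 1 == t) = false by apply/negbTE; rewrite eq_sym.
  by rewrite mulr0 => ->.
have hiii : Phi (n, 1%N) (s, 1%N) != 0.
  apply/negP => /eqP h1; elim: (@INJ1 n (Phi (n, 1%N) (s, 0%N))).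
  have z1 : forall a, Phi (n, 1%N) (a, 1%N) = 0.
    move=> a; apply/eqP; apply: contraT => ha; have [es _] := hii a ha.
    by move: ha; rewrite es h1 eqxx.
  have d0 : forall a, Phi (n, 1%N) (a, 0%N) = (a == s)%:R * Phi (n, 1%N) (a, 0%N) + Phi (n, 1%N) (a, 0%N) * (a == t)%:R.
    move=> a; move: (KEY1 n (a, 0%N) (a, 0%N)) => /=.
    have -> : (a == a + Posz 0) = true by apply/eqP; lia.
    by rewrite Cq0 mul1r hs ht !xpair_eqE /= !andbT.
  have dst : 0 = Phi (n, 1%N) (t, 0%N) + Phi (n, 1%N) (s, 0%N).
    move: (KEY1 n (s, 0%N) (t, 0%N)) => /=.
    have -> : (t == s + Posz 0) = false by apply/eqP => h; move/eqP: hst; apply; lia.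
    by rewrite hs ht !xpair_eqE /= !eqxx /= mul1r mulr1.
  move=> [a M]; rewrite hs ht !xpair_eqE /=.
  case: M => [|[|M]] /=.
  - rewrite (_ : (0%N == 0%N) = true) ?andbT; last by apply/eqP.
    case: (eqVneq a s) => [->|has].
      by rewrite (negbTE hst) /= subr0 mulr1.
    case: (eqVneq a t) => [->|hat].
      rewrite sub0r mulrN1.
      by apply/eqP; rewrite -addr_eq0 -dst.
    by rewrite d0 (negbTE has) (negbTE hat) mul0r mulr0 addr0 subrr mulr0.
  - by rewrite (_ : (1 == 0)%N = false) // !andbF subrr mulr0 z1.
  - by rewrite (_ : (M.+2 == 0)%N = false) // !andbF subrr mulr0 hi.
have [_ ->] := hii s hiii.
split => //.
by move=> a has; apply/eqP; apply: contraNT has => ha; have [-> _] := hii a ha.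
Qed.

Definition Pg (n : int) := forall x, Phi (n, 0%N) x = (x == (n, 0%N))%:R.

Lemma neq_grp n s t :
  (forall x, Phi (n, 0%N) x = (x == (s, 0%N))%:R) ->
  (forall x, Phi (n + 1, 0%N) x = (x == (t, 0%N))%:R) -> s != t.
Proof.
move=> hs ht; apply/eqP => est; apply: (@INJ0 n) => x.
by rewrite hs ht est.
Qed.

Lemma Pg_next n : Pg n -> Pg (n + 1).
Proof.
move=> hn; have [t ht] := grp (n + 1).
have [et _ _ _] := deg1 hn ht (neq_grp hn ht).
by move=> x; rewrite ht et.
Qed.

Lemma Pg_prev n : Pg (n + 1) -> Pg n.
Proof.
move=> hn; have [s hs] := grp n.
have [et _ _ _] := deg1 hs hn (neq_grp hs hn).
have esn : s = n by move: et; lia.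
by move=> x; rewrite hs esn.
Qed.

Lemma Pg_all n : Pg n.
Proof.
case: n => m.
  elim: m => [|m IH]; first by move=> x; rewrite ONE eq_sym.
  have := Pg_next IH; by rewrite (_ : Posz m + 1 = Posz m.+1) //; lia.
elim: m => [|m IH].
  apply: Pg_prev; rewrite (_ : Negz 0 + 1 = Posz 0); last by lia.
  by move=> x; rewrite ONE eq_sym.
apply: Pg_prev; by rewrite (_ : Negz m.+1 + 1 = Negz m) //; lia.
Qed.

Definition alpha (n : int) (m : nat) := Phi (n, m) (n, m).

Lemma D0 n a M : (0 < M)%N -> Phi (n, 0%N) (a, M) = 0.
Proof.
move=> hM; rewrite (Pg_all n) xpair_eqE.
by rewrite (_ : (M == 0%N) = false) ?andbF //; apply/eqP; lia.
Qed.

Definition Sm (m : nat) (n : int) :=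
  [/\ alpha n m != 0, (forall a, a != n -> Phi (n, m) (a, m) = 0),
      (forall a M, (m < M)%N -> Phi (n, m) (a, M) = 0) &
      ((1 < m)%N -> alpha n m = alpha n 1 * alpha (n + 1) m.-1)].

Lemma S1 n : Sm 1 n.
Proof.
have [_ h1 h2 h3] := deg1 (Pg_all n) (Pg_all (n + 1)) (neq_grp (Pg_all n) (Pg_all (n + 1))).
by split.
Qed.

Lemma Kab n m a M : (1 < M)%N ->
  Cq q M 1 * Phi (n, m) (a, M) =
  \sum_(0 <= i < m.+1) Cq q m i * Phi (n, i) (a, 1%N) * Phi (n + Posz i, (m - i)%N) (a + 1, (M - 1)%N).
Proof.
move=> hM; rewrite -KEY /=.
have -> : (a + 1 == a + Posz 1) = true by apply/eqP; lia.
by rewrite subnKC // ltnW.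
Qed.

Lemma mainS N m n : (1 <= m <= N)%N -> Sm m n.
Proof.
elim: N m n => [|N IH] m n; first by case: m => [|m] /andP [] //; rewrite ltn0.
move=> /andP [h1m hmN].
case: (leqP m N) => hmN'; first by apply: IH; rewrite h1m.
have em : m = N.+1 by apply/eqP; rewrite eqn_leq hmN hmN'.
case: (eqVneq m 1%N) => [->|hm1]; first exact: S1.
have h2m : (1 < m)%N by rewrite ltn_neqAle eq_sym hm1 h1m.
have Dg : forall j n' a M, (j < m)%N -> (j < M)%N -> Phi (n', j) (a, M) = 0.
  move=> j n' a M hj hjM; case: j hj hjM => [|j] hj hjM; first exact: D0.
  have hj' : (1 <= j.+1 <= N)%N by apply/andP; split; lia.
  have [_ _ h _] := IH j.+1 n' hj'; exact: h.
have T0 : forall a M, (1 < M)%N -> forall i, (i < m.+1)%N -> (i == 0)%N || (m - i < M - 1)%N ->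
    Cq q m i * Phi (n, i) (a, 1%N) * Phi (n + Posz i, (m - i)%N) (a + 1, (M - 1)%N) = 0.
  move=> a M hM i hi /orP [/eqP ->|hlt]; first by rewrite D0 // mulr0 mul0r.
  case: (eqVneq i 0%N) => [->|hi0]; first by rewrite D0 // mulr0 mul0r.
  rewrite (Dg (m - i)%N) ?mulr0 //; lia.
have hbig : forall a M, (m < M)%N -> Phi (n, m) (a, M) = 0.
  move=> a M hM; have hM1 : (1 < M)%N by apply: leq_ltn_trans hM.
  have := Kab n m a hM1; rewrite sum_nat_zero; last first.
    move=> i hi; apply: T0 => //; case: (eqVneq i 0%N) => //= hi0; lia.
  by move/eqP; rewrite mulf_eq0 (negbTE (CqM1 (ltnW hM1))) /= => /eqP.
have [a1 off1 _ _] := S1 n.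
have hoff : forall a, a != n -> Phi (n, m) (a, m) = 0.
  move=> a han; have := Kab n m a h2m; rewrite sum_nat_zero; last first.
    move=> i hi; case: (eqVneq i 1%N) => [->|hi1].
      by rewrite off1 // mulr0 mul0r.
    apply: T0 => //; case: (eqVneq i 0%N) => //= hi0; lia.
  by move/eqP; rewrite mulf_eq0 (negbTE (CqM1 (ltnW h2m))) /= => /eqP.
have hrec : alpha n m = alpha n 1 * alpha (n + 1) m.-1.
  have := Kab n m n h2m; rewrite (@sum_nat_single _ _ 1%N); first last.
  - move=> i hi hi1; apply: T0 => //; case: (eqVneq i 0%N) => //= hi0; lia.
  - by rewrite ltnS ltnW.
  rewrite -mulrA subn1 => /(mulfI (CqM1 (ltnW h2m))).
  by rewrite /alpha.
have hm1' : (1 <= m.-1 <= N)%N by apply/andP; split; lia.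
have [a2 _ _ _] := IH m.-1 (n + 1) hm1'.
split => //; rewrite hrec mulf_neq0 //.
Qed.

Lemma mainS' m n : (1 <= m)%N -> Sm m n.
Proof. by move=> h; apply: (@mainS m); rewrite h leqnn. Qed.

Lemma alpha_one : (forall n, alpha n 1 = 1) -> forall m n, (1 <= m)%N -> alpha n m = 1.
Proof.
move=> h1; elim=> [//|m IH] n _.
case: m IH => [|m] IH; first exact: h1.
have [_ _ _ ->] := mainS' n (isT : (1 <= m.+2)%N) ; last by [].
by rewrite h1 IH // mul1r.
Qed.

End Abstract.


Section Final.
Variable k : fieldType.

Lemma e_neq (b c : B) : b != c -> e b != e c :> Hq k.
Proof.
move=> hbc; apply/eqP => /(congr1 (mcoeff b)); rewrite !e_coef eqxx eq_sym (negbTE hbc).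
by move/eqP; rewrite oner_eq0.
Qed.

Lemma e_neq2 (b c d : B) (beta : k) : b != c -> b != d -> e b != beta *: (e c - e d) :> Hq k.
Proof.
move=> hbc hbd; apply/eqP => /(congr1 (mcoeff b)).
rewrite mcoeffZ mcoeffB !e_coef eqxx eq_sym (negbTE hbc) eq_sym (negbTE hbd) subrr mulr0.
by move/eqP; rewrite oner_eq0.
Qed.

Lemma lin_facts (phi : Hq k -> Hq k) : linear phi ->
  forall (u v : Hq k) (beta : k), phi (beta *: (u - v)) = beta *: (phi u - phi v).
Proof.
move=> hlin.
have phi0 : phi 0 = 0.
  have := hlin 1 0 0; rewrite scale1r addr0 => h.
  have := congr1 (fun z => z - phi 0) h; rewrite /= subrr addrK.
  by rewrite scale1r => h'; apply/esym.
have phiZ : forall a u, phi (a *: u) = a *: phi u.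
  by move=> a u; have := hlin a u 0; rewrite !addr0 phi0 addr0.
have phiD : forall u v, phi (u + v) = phi u + phi v.
  by move=> u v; have := hlin 1 u v; rewrite !scale1r.
move=> u v beta; rewrite phiZ; congr (_ *: _).
by have := phiD (u - v) v; rewrite subrK => ->; rewrite addrK.
Qed.

End Final.

Theorem lemma2p9 (k : fieldType) (q : k)
  (hq0 : q != 0) (hqroot : forall n : nat, (0 < n)%N -> q ^+ n != 1)
  (phi : Hq k -> Hq k) (hphi : Aut0 q phi) :
  (forall (n : int) (m : nat), (1 <= m)%N ->
     exists alpha : k, alpha != 0 /\
       exists h : Hq k, lowdeg m h /\ phi (e (n, m)) = alpha *: e (n, m) + h)
  /\
  ((forall n : int, exists h : Hq k,
       lowdeg 1 h /\ phi (e (n, 1%N)) = 1 *: e (n, 1%N) + h) ->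
   forall (n : int) (m : nat), (1 <= m)%N ->
     exists h : Hq k, lowdeg m h /\ phi (e (n, m)) = 1 *: e (n, m) + h).
Proof.
case: hphi => hlin hbij hD heps h1.
have hinj := bij_inj hbij.
pose Phi := fun (b x : B) => (phi (e b))@_x.
have KEY : forall (n : int) (m : nat) (p r : B),
  (if r.1 == p.1 + Posz p.2 then Cq q (p.2 + r.2) p.2 * Phi (n, m) (p.1, (p.2 + r.2)%N) else 0)
  = \sum_(0 <= i < m.+1) Cq q m i * Phi (n, i) p * Phi (n + Posz i, (m - i)%N) r.
  move=> n m p r; have := congr1 (mcoeff (p, r)) (hD (e (n, m))).
  by rewrite DeltaE tmap_Delta_e.
have EPS : forall n : int, exists x : B, x.2 = 0%N /\ Phi (n, 0%N) x != 0.
  move=> n; apply: NNPP => hn.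
  have := heps (e (n, 0%N)); rewrite !eps_Lf Lf_e /=.
  rewrite /Lf big1_fset.
    by move/eqP; rewrite eq_sym oner_eq0.
  move=> x _ _; case: (eqVneq x.2 0%N) => hx; last by rewrite /= mulr0.
  case: (eqVneq (Phi (n, 0%N) x) 0) => hp; first by rewrite /Phi in hp; rewrite hp mul0r.
  by exfalso; apply: hn; exists x.
have ONE : forall x, Phi (0, 0%N) x = ((0, 0%N) == x)%:R.
  by move=> x; rewrite /Phi h1 e_coef.
have INJ0 : forall n : int, ~ (forall x, Phi (n, 0%N) x = Phi (n + 1, 0%N) x).
  move=> n hn; have : phi (e (n, 0%N)) = phi (e (n + 1, 0%N)) by apply/malgP.
  move/hinj/eqP; apply/negP; apply: e_neq; rewrite xpair_eqE andbT.
  by apply/eqP; lia.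
have INJ1 : forall (n : int) (beta : k),
    ~ (forall x, Phi (n, 1%N) x = beta * (Phi (n, 0%N) x - Phi (n + 1, 0%N) x)).
  move=> n beta hn.
  have : phi (e (n, 1%N)) = phi (beta *: (e (n, 0%N) - e (n + 1, 0%N))).
    rewrite (lin_facts hlin); apply/malgP => x; rewrite mcoeffZ mcoeffB; exact: hn.
  move/hinj/eqP; apply/negP; apply: e_neq2; rewrite xpair_eqE.
    by rewrite (_ : (1 == 0)%N = false) ?andbF.
  by rewrite (_ : (1 == 0)%N = false) ?andbF.
have S := mainS' hqroot KEY EPS ONE INJ0 INJ1.
have gen : forall n m, (1 <= m)%N ->
    lowdeg m (phi (e (n, m)) - alpha Phi n m *: e (n, m)).
  move=> n m hm [a M]; rewrite -mcoeff_neq0 mcoeffB mcoeffZ e_coef => hne.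
  rewrite ltnNge; apply: contra hne => hmM; apply/eqP.
  have [_ off big _] := S m n hm.
  case: (ltngtP m M) hmM => // [hlt _|<- _].
    rewrite -/(Phi (n, m) (a, M)) big // xpair_eqE.
    by rewrite (_ : (m == M) = false) ?andbF ?mulr0 ?subr0 //; apply/eqP; lia.
  rewrite xpair_eqE eqxx andbT; case: (eqVneq n a) => [<-|hna].
    by rewrite mulr1 subrr.
  by rewrite -/(Phi (n, m) (a, m)) off ?mulr0 ?subr0 // eq_sym.
split.
  move=> n m hm; exists (alpha Phi n m); have [a0 _ _ _] := S m n hm; split => //.
  exists (phi (e (n, m)) - alpha Phi n m *: e (n, m)); split; first exact: gen.
  by rewrite addrC subrK.
move=> hyp n m hm.
have A1 : forall n, alpha Phi n 1 = 1.
  move=> n'; have [h [hl he]] := hyp n'.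
  rewrite /alpha /Phi he mcoeffD mcoeffZ e_coef eqxx mul1r.
  rewrite (mcoeff_outdom (k := (n', 1%N))) ?addr0 //.
  by apply/negP => /hl.
have := alpha_one hqroot KEY EPS ONE INJ0 INJ1 A1 n hm => hα.
exists (phi (e (n, m)) - 1 *: e (n, m)); split; last by rewrite addrC subrK.
by rewrite -{1}hα; exact: gen.
Qed.
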